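(* Let $\pi>0$, $\bar d>0$, $0<\theta_1<\dots<\theta_K$, $0\le\beta_1<\dots<\beta_M\le1$, and let $A:[0,D]\to[0,\bar d]$ be continuously differentiable and decreasing. Let $\sigma(Q,\beta,\theta)=-[\theta\beta+\pi(1-\beta)]A'(Q)$ and enumerate the $KM$ types as $\Lambda_1,\dots,\Lambda_{KM}$ with $\sigma(Q,\Lambda_1)\le\dots\le\sigma(Q,\Lambda_{KM})$ for all $Q$. Let $L(Q,\beta,\theta)=\theta[\bar d-\beta A(Q)]-\pi(1-\beta)A(Q)$ and $\bar S(Q,\Pi,\Lambda)=L(Q,\Lambda)-\Pi$. Say items $\phi_i=(Q_i,\Pi_i)$ and $\phi_j=(Q_j,\Pi_j)$ are pairwise incentive compatible if $\bar S(Q_i,\Pi_i,\Lambda_i)\ge\bar S(Q_j,\Pi_j,\Lambda_i)$ and $\bar S(Q_j,\Pi_j,\Lambda_j)\ge\bar S(Q_i,\Pi_i,\Lambda_j)$. Let $\{(Q_i,\Pi_i)\}_{i=1}^{KM}$ with $Q_i\in[0,D]$ satisfy $Q_1\le\dots\le Q_{KM}$ and $\Pi_1\le\dots\le\Pi_{KM}$. Then for any $i_1<i_2<i_3$: if $\phi_{i_1},\phi_{i_2}$ are pairwise incentive compatible and $\phi_{i_2},\phi_{i_3}$ are pairwise incentive compatible, then $\phi_{i_1},\phi_{i_3}$ are pairwise incentive compatible.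
   Context: Model: an operator offers one contract item (data cap $Q_i$, fee $\Pi_i$) for each user type $\Lambda_i=(\beta,\theta)$ (network substitutability $\beta$, data valuation $\theta$). $\pi$ is the overage price, $\bar d$ the mean demand, $A(Q)$ the expected overage consumption under cap $Q$ (decreasing, convex). $\sigma$ is the willingness-to-pay, by which types are sorted (the ordering does not depend on $Q$). *)

(* Defs.v *)
From Stdlib Require Import Reals Lra.
Open Scope R_scope.

Definition has_derivative_on (A A' : R -> R) (a b : R) : Prop :=
  forall x, a <= x <= b ->
  forall eps, 0 < eps -> exists delta, 0 < delta /\
    forall y, a <= y <= b -> y <> x -> Rabs (y - x) < delta ->
      Rabs ((A y - A x) / (y - x) - A' x) < eps.

Definition continuous_on_interval (f : R -> R) (a b : R) : Prop :=
  forall x, a <= x <= b ->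
  forall eps, 0 < eps -> exists delta, 0 < delta /\
    forall y, a <= y <= b -> Rabs (y - x) < delta -> Rabs (f y - f x) < eps.

Definition C1_on (A A' : R -> R) (a b : R) : Prop :=
  has_derivative_on A A' a b /\ continuous_on_interval A' a b.

Definition wtp_sigma (pi : R) (A' : R -> R) (Q beta theta : R) : R :=
  - (theta * beta + pi * (1 - beta)) * A' Q.

Definition Lval (pi dbar : R) (A : R -> R) (Q beta theta : R) : R :=
  theta * (dbar - beta * A Q) - pi * (1 - beta) * A Q.

Definition Sbar (pi dbar : R) (A : R -> R) (Q Pi beta theta : R) : R :=
  Lval pi dbar A Q beta theta - Pi.

(* pairwise incentive compatibility of items i and j, where item k is
   (Q k, P k) and type k is (be k, th k) *)
Definition pairwise_IC (pi dbar : R) (A : R -> R) (Q P be th : nat -> R)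
  (i j : nat) : Prop :=
  Sbar pi dbar A (Q i) (P i) (be i) (th i) >= Sbar pi dbar A (Q j) (P j) (be i) (th i) /\
  Sbar pi dbar A (Q j) (P j) (be j) (th j) >= Sbar pi dbar A (Q i) (P i) (be j) (th j).

(* Main.v *)
Require Import Defs.
From Stdlib Require Import Reals Lra Lia.
From Coquelicot Require Import Coquelicot.
Open Scope R_scope.

Lemma A_cont (A A' : R -> R) a b : has_derivative_on A A' a b ->
  forall x, a <= x <= b -> forall eps, 0 < eps -> exists delta, 0 < delta /\
    forall y, a <= y <= b -> Rabs (y - x) < delta -> Rabs (A y - A x) < eps.
Proof.
  intros HD x Hx eps He.
  destruct (HD x Hx 1 Rlt_0_1) as [d1 [Hd1 H1]].
  assert (Hp : 0 < Rabs (A' x) + 1) by (pose proof (Rabs_pos (A' x)); lra).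
  exists (Rmin d1 (eps / (Rabs (A' x) + 1))). split.
  - apply Rmin_pos; [lra| apply Rdiv_lt_0_compat; lra].
  - intros y Hy Hyd.
    destruct (Req_dec y x) as [->|Hne].
    + rewrite Rminus_diag, Rabs_R0; lra.
    + assert (Hyd1 : Rabs (y - x) < d1) by (eapply Rlt_le_trans; [exact Hyd| apply Rmin_l]).
      assert (Hyd2 : Rabs (y - x) < eps / (Rabs (A' x) + 1)) by (eapply Rlt_le_trans; [exact Hyd| apply Rmin_r]).
      specialize (H1 y Hy Hne Hyd1).
      assert (Hq : Rabs ((A y - A x) / (y - x)) < Rabs (A' x) + 1).
      { pose proof (Rabs_triang ((A y - A x) / (y - x) - A' x) (A' x)).
        replace ((A y - A x) / (y - x) - A' x + A' x) with ((A y - A x) / (y - x)) in H by ring.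
        lra. }
      assert (Hyx : y - x <> 0) by lra.
      replace (A y - A x) with ((A y - A x) / (y - x) * (y - x)) by (field; auto).
      rewrite Rabs_mult.
      assert (Hpos : 0 < Rabs (y - x)) by (apply Rabs_pos_lt; auto).
      apply Rlt_le_trans with ((Rabs (A' x) + 1) * Rabs (y - x)).
      * apply Rmult_lt_compat_r; auto.
      * apply Rmult_le_reg_r with (/ (Rabs (A' x) + 1)).
        { apply Rinv_0_lt_compat; auto. }
        replace ((Rabs (A' x) + 1) * Rabs (y - x) * / (Rabs (A' x) + 1)) with (Rabs (y-x)) by (field; lra).
        unfold Rdiv in Hyd2. lra.
Qed.

Definition clamp a b x := Rmax a (Rmin b x).

Lemma clamp_in a b x : a <= b -> a <= clamp a b x <= b.
Proof. intros; unfold clamp, Rmax, Rmin; repeat destruct Rle_dec; lra. Qed.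

Lemma clamp_lip a b x y : a <= b -> Rabs (clamp a b y - clamp a b x) <= Rabs (y - x).
Proof. intros; unfold clamp, Rmax, Rmin; repeat destruct Rle_dec; unfold Rabs; repeat destruct Rcase_abs; lra. Qed.

Lemma clamp_id a b x : a <= x <= b -> clamp a b x = x.
Proof. intros; unfold clamp, Rmax, Rmin; repeat destruct Rle_dec; lra. Qed.

Lemma mvt_neg (A A' : R -> R) D x y :
  C1_on A A' 0 D -> 0 <= x -> x < y -> y <= D -> A y < A x ->
  exists c, 0 <= c <= D /\ A' c < 0.
Proof.
  intros [HD _] H0 Hxy HyD Hlt.
  set (B := fun t => A (clamp x y t)).
  destruct (MVT_gen B x y A') as [c [Hc Heq]].
  - rewrite Rmin_left, Rmax_right by lra. intros t Ht.
    apply is_derive_Reals. intros eps He.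
    destruct (HD t ltac:(lra) eps He) as [d [Hd Hd']].
    assert (Hm : 0 < Rmin d (Rmin (t - x) (y - t))) by (repeat apply Rmin_pos; lra).
    exists (mkposreal _ Hm). intros h Hh0 Hh. simpl in Hh.
    assert (Hh1 : Rabs h < d) by (eapply Rlt_le_trans; [exact Hh| apply Rmin_l]).
    assert (Hh2 : Rabs h < Rmin (t - x) (y - t)) by (eapply Rlt_le_trans; [exact Hh| apply Rmin_r]).
    pose proof (Rmin_l (t - x) (y - t)). pose proof (Rmin_r (t - x) (y - t)).
    assert (Hb : -(t - x) < h < y - t) by (unfold Rabs in Hh2; destruct Rcase_abs; lra).
    unfold B. rewrite !clamp_id by lra.
    specialize (Hd' (t + h) ltac:(lra) ltac:(lra)).
    replace (t + h - t) with h in Hd' by ring. auto.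
  - rewrite Rmin_left, Rmax_right by lra. intros t Ht.
    intros eps He.
    destruct (A_cont A A' 0 D HD (clamp x y t) ltac:(pose proof (clamp_in x y t); lra) eps He) as [d [Hd Hd']].
    exists d. split; auto. intros z [_ Hz]. simpl in *. unfold R_dist in *.
    unfold B. apply Hd'.
    + pose proof (clamp_in x y z); lra.
    + eapply Rle_lt_trans; [apply clamp_lip; lra| auto].
  - rewrite Rmin_left, Rmax_right in Hc by lra.
    exists c. split; [lra|].
    unfold B in Heq. rewrite !clamp_id in Heq by lra.
    destruct (Rlt_le_dec (A' c) 0) as [h|h]; auto.
    assert (0 <= A' c * (y - x)) by (apply Rmult_le_pos; lra). lra.
Qed.

Lemma chain_le (f : nat -> R) n : (forall i, (S i < n)%nat -> f i <= f (S i)) ->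
  forall i j, (i <= j)%nat -> (j < n)%nat -> f i <= f j.
Proof.
  intros H i j Hij. induction Hij; intros; [lra|].
  apply Rle_trans with (f m); [apply IHHij; lia| apply H; lia].
Qed.
Theorem lemma5 (pi dbar D : R) (K M : nat) (theta beta : nat -> R)
  (A A' : R -> R) (tK tM : nat -> nat) (Q P : nat -> R) :
  0 < pi -> 0 < dbar ->
  (K > 0)%nat -> 0 < theta 0%nat ->
  (forall k, (S k < K)%nat -> theta k < theta (S k)) ->
  (M > 0)%nat -> 0 <= beta 0%nat -> beta (pred M) <= 1 ->
  (forall m, (S m < M)%nat -> beta m < beta (S m)) ->
  C1_on A A' 0 D ->
  (forall x, 0 <= x <= D -> 0 <= A x <= dbar) ->
  (forall x y, 0 <= x <= D -> 0 <= y <= D -> x <= y -> A y <= A x) ->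
  (* enumeration of the K*M types *)
  (forall i, (i < K * M)%nat -> (tK i < K)%nat /\ (tM i < M)%nat) ->
  (forall i j, (i < K * M)%nat -> (j < K * M)%nat ->
     tK i = tK j -> tM i = tM j -> i = j) ->
  (forall k m, (k < K)%nat -> (m < M)%nat ->
     exists i, (i < K * M)%nat /\ tK i = k /\ tM i = m) ->
  (* sorted by willingness to pay, for all Q *)
  (forall q i, 0 <= q <= D -> (S i < K * M)%nat ->
     wtp_sigma pi A' q (beta (tM i)) (theta (tK i))
       <= wtp_sigma pi A' q (beta (tM (S i))) (theta (tK (S i)))) ->
  (* the contract items *)
  (forall i, (i < K * M)%nat -> 0 <= Q i <= D) ->
  (forall i, (S i < K * M)%nat -> Q i <= Q (S i)) ->
  (forall i, (S i < K * M)%nat -> P i <= P (S i)) ->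
  forall i1 i2 i3, (i1 < i2)%nat -> (i2 < i3)%nat -> (i3 < K * M)%nat ->
  pairwise_IC pi dbar A Q P (fun i => beta (tM i)) (fun i => theta (tK i)) i1 i2 ->
  pairwise_IC pi dbar A Q P (fun i => beta (tM i)) (fun i => theta (tK i)) i2 i3 ->
  pairwise_IC pi dbar A Q P (fun i => beta (tM i)) (fun i => theta (tK i)) i1 i3.
Proof.
  intros Hpi Hd HK Ht0 Ht HM Hb0 Hb1 Hb HC1 HA HAm Hen Hinj Hsurj Hsort HQ HQs HPs
    i1 i2 i3 H12 H23 H3 [I1 I2] [I3 I4].
  set (c := fun i => theta (tK i) * beta (tM i) + pi * (1 - beta (tM i))).
  assert (Hc : forall q, 0 <= q <= D -> A' q < 0 -> forall i j, (i <= j)%nat -> (j < K * M)%nat -> c i <= c j).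
  { intros q Hq Hneg. apply chain_le. intros i Hi. specialize (Hsort q i Hq Hi).
    unfold wtp_sigma in Hsort. unfold c.
    apply Rmult_le_reg_r with (- A' q); [lra|]. lra. }
  assert (HQc := chain_le Q (K*M) HQs). assert (HPc := chain_le P (K*M) HPs).
  assert (Q12 : Q i1 <= Q i2) by (apply HQc; lia).
  assert (Q23 : Q i2 <= Q i3) by (apply HQc; lia).
  assert (q1 := HQ i1 ltac:(lia)). assert (q2 := HQ i2 ltac:(lia)). assert (q3 := HQ i3 ltac:(lia)).
  assert (a12 : A (Q i2) <= A (Q i1)) by (apply HAm; lra).
  assert (a23 : A (Q i3) <= A (Q i2)) by (apply HAm; lra).
  assert (F1 : (c i2 - c i1) * (A (Q i2) - A (Q i3)) >= 0).
  { destruct (Req_dec (A (Q i3)) (A (Q i2))) as [e|ne].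
    - rewrite e. lra.
    - assert (Qlt : Q i2 < Q i3).
      { destruct (Rle_lt_or_eq_dec _ _ Q23) as [h|h]; auto. rewrite h in ne. lra. }
      destruct (mvt_neg A A' D (Q i2) (Q i3) HC1 ltac:(lra) Qlt ltac:(lra) ltac:(lra)) as [q [Hq Hn]].
      assert (c i1 <= c i2) by (apply (Hc q Hq Hn); lia).
      apply Rle_ge, Rmult_le_pos; lra. }
  assert (F2 : (c i3 - c i2) * (A (Q i1) - A (Q i2)) >= 0).
  { destruct (Req_dec (A (Q i2)) (A (Q i1))) as [e|ne].
    - rewrite e. lra.
    - assert (Qlt : Q i1 < Q i2).
      { destruct (Rle_lt_or_eq_dec _ _ Q12) as [h|h]; auto. rewrite h in ne. lra. }
      destruct (mvt_neg A A' D (Q i1) (Q i2) HC1 ltac:(lra) Qlt ltac:(lra) ltac:(lra)) as [q [Hq Hn]].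
      assert (c i2 <= c i3) by (apply (Hc q Hq Hn); lia).
      apply Rle_ge, Rmult_le_pos; lra. }
  assert (SE : forall q p i, Sbar pi dbar A q p (beta (tM i)) (theta (tK i)) = theta (tK i) * dbar - c i * A q - p).
  { intros. unfold Sbar, Lval, c. ring. }
  unfold pairwise_IC; cbv beta in I1, I2, I3, I4 |- *. rewrite !SE in I1, I2, I3, I4 |- *.
  clearbody c. split; rewrite ?SE; nra.
Qed.
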